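(* Let $S_n$ be as defined in the context. For every $n\in\mathbb{N}$, $n\ge 1$, and every $w\in\{0,1\}^n$, $\mathrm{occ}_b(w,S_n)=1$; that is, $S_n$, split into consecutive blocks of length $n$, contains every binary string of length $n$ exactly once.
   Context: Strings are indexed from $0$; $x[i..j]$ is the substring from position $i$ to $j$; $x^j$ is $j$-fold concatenation. For a string $x$ and $w$ nonempty, $\mathrm{occ}_b(w,x)=|\{i: x[i..i+|w|-1]=w,\ i\equiv 0 \bmod |w|\}|$. de Bruijn strings: for $n\ge1$, a de Bruijn string of order $n$ is a binary string $x$ of length $2^n$ such that every $w\in\{0,1\}^n$ occurs exactly once as a substring of $x\cdot x[0..n-2]$. $db(n)$ is the lexicographically least one, produced by Martin's algorithm: start with $x=1^{n-1}$; while possible, append a bit (preferring $0$ over $1$) so that all length-$n$ substrings of $x$ remain distinct; then delete the prefix $1^{n-1}$. For $0\le i<2^n$, $db_i(n)=db(n)[i..2^n-1]\cdot db(n)[0..i-1]$. For $n\ge1$ write $n=2^st$ with $s\ge0$ and $t$ odd, let $B_{n,i}=db_i(n)^t$ for $0\le i<2^s$, and $S_n=B_{n,0}B_{n,1}\cdots B_{n,2^s-1}$. *)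

(* Defs.v *)
From mathcomp Require Import all_boot.
Set Implicit Arguments. Unset Strict Implicit. Unset Printing Implicit Defensive.

(* Binary strings are [seq bool], with [false] = 0 and [true] = 1, indexed from 0. *)

Definition substr (x : seq bool) (i m : nat) : seq bool := take m (drop i x).

Definition substrings (m : nat) (x : seq bool) : seq (seq bool) :=
  mkseq (fun i => substr x i m) (size x + 1 - m).

Definition occ_b (w x : seq bool) : nat :=
  count (fun i => (i %% size w == 0) && (substr x i (size w) == w)) (iota 0 (size x)).

Definition martin_step (n : nat) (x : seq bool) : option (seq bool) :=
  if uniq (substrings n (rcons x false)) then Some (rcons x false)
  else if uniq (substrings n (rcons x true)) then Some (rcons x true)
  else None.

(* iterate while possible; the fuel bounds the number of steps (each step adds a new
   distinct length-n substring, so at most 2^n steps are ever possible) *)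
Fixpoint martin_loop (n fuel : nat) (x : seq bool) : seq bool :=
  match fuel with
  | 0 => x
  | f.+1 => match martin_step n x with
            | Some y => martin_loop n f y
            | None => x
            end
  end.

Definition db (n : nat) : seq bool :=
  drop n.-1 (martin_loop n (2 ^ n).+1 (nseq n.-1 true)).

Definition db_rot (n i : nat) : seq bool := rot i (db n).

Definition s_of (n : nat) : nat := logn 2 n.
Definition t_of (n : nat) : nat := n %/ 2 ^ s_of n.

Definition B (n i : nat) : seq bool := flatten (nseq (t_of n) (db_rot n i)).

Definition S (n : nat) : seq bool := flatten [seq B n i | i <- iota 0 (2 ^ s_of n)].

(* Main.v *)
Require Import Defs.
From mathcomp Require Import all_boot zify.
Set Implicit Arguments. Unset Strict Implicit. Unset Printing Implicit Defensive.

Fixpoint allw (k : nat) : seq (seq bool) :=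
  if k is k'.+1 then map (cons false) (allw k') ++ map (cons true) (allw k')
  else [:: [::]].

Lemma allw_mem k w : (w \in allw k) = (size w == k).
Proof.
elim: k w => [|k IH] w; case: w => [|c w] //=.
  by rewrite mem_cat; apply/negP => /orP[] /mapP[].
rewrite mem_cat; case: c; rewrite /= eqSS -IH.
  apply/orP/idP => [[/mapP[u _ //]|/mapP[u hu [->]]//]|h]; right; exact: map_f.
apply/orP/idP => [[/mapP[u hu [->]]//|/mapP[u _ //]]|h]; left; exact: map_f.
Qed.

Lemma size_allw k : size (allw k) = 2 ^ k.
Proof. by elim: k => //= k IH; rewrite size_cat !size_map IH expnS mul2n addnn. Qed.

Lemma allw_uniq k : uniq (allw k).
Proof.
elim: k => //= k IH; rewrite cat_uniq !map_inj_uniq ?IH /=; try by move=> ? ? [].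
rewrite andbT; apply/hasPn => u /mapP[v _ ->]; apply/mapP => -[z _ //].
Qed.

Lemma substrings_rcons m x b : m <= size x ->
  substrings m.+1 (rcons x b) = rcons (substrings m.+1 x) (rcons (drop (size x - m) x) b).
Proof.
move=> hm; rewrite /substrings size_rcons.
have -> : (size x).+1 + 1 - m.+1 = (size x + 1 - m.+1).+1 by lia.
rewrite mkseqS; congr rcons.
  rewrite /mkseq; apply/eq_in_map => i; rewrite mem_iota => /andP[_ hi].
  rewrite /substr drop_rcons; last by lia.
  rewrite -cats1 takel_cat // size_drop; lia.
have -> : size x + 1 - m.+1 = size x - m by lia.
rewrite /substr drop_rcons; last by lia.
by rewrite take_oversize // size_rcons size_drop; lia.
Qed.

Lemma substrings_small m x : size x < m.+1 -> substrings m.+1 x = [::].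
Proof. by move=> h; rewrite /substrings; have -> : size x + 1 - m.+1 = 0 by lia. Qed.

Lemma subs_rcons_mem m x b w : w \in substrings m.+1 x -> w \in substrings m.+1 (rcons x b).
Proof.
move=> hw; case: (leqP m (size x)) => hm.
  by rewrite substrings_rcons // mem_rcons in_cons hw orbT.
have h : size x < m.+1 by lia.
by rewrite (substrings_small h) in hw.
Qed.

Lemma subs_size m x w : w \in substrings m x -> size w = m.
Proof.
rewrite /substrings /mkseq => /mapP[i]; rewrite mem_iota => /andP[_ hi] ->.
rewrite /substr size_take size_drop; case: ifP => // /negbT.
move: hi; rewrite add0n => hi h.
rewrite -leqNgt in h.
move: hi h; set k := size x => hi h; lia.
Qed.

Definition Inv m x := [/\ m <= size x, take m x = nseq m true, uniq (substrings m.+1 x) &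
  forall k, m <= k < size x -> nth false x k ->
    rcons (substr x (k - m) m) false \in substrings m.+1 x].

Lemma Inv_step m x b : Inv m x -> uniq (substrings m.+1 (rcons x b)) ->
  (b -> ~~ uniq (substrings m.+1 (rcons x false))) -> Inv m (rcons x b).
Proof.
case=> h1 h2 h3 h4 hu hg; split => //.
- by rewrite size_rcons; lia.
- by rewrite -cats1 takel_cat.
move=> k; rewrite size_rcons => /andP[hk1 hk2].
have [hlt|heq] : k < size x \/ k = size x by lia.
  rewrite nth_rcons hlt => /(h4 k); rewrite hk1 hlt => /(_ isT) hw.
  have -> : substr (rcons x b) (k - m) m = substr x (k - m) m.
    rewrite /substr drop_rcons; last by lia.
    rewrite -cats1 takel_cat // size_drop; lia.
  exact: subs_rcons_mem.
subst k; rewrite nth_rcons ltnn eqxx => hb; move: (hg hb).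
rewrite substrings_rcons // rcons_uniq h3 andbT negbK => hin.
have -> : substr (rcons x b) (size x - m) m = drop (size x - m) x.
  rewrite /substr drop_rcons; last by lia.
  rewrite -cats1 takel_cat ?size_drop; last by lia.
  by rewrite take_oversize // size_drop; lia.
exact: subs_rcons_mem.
Qed.

Lemma loop_inv m f x : Inv m x ->
  Inv m (martin_loop m.+1 f x) /\
  (martin_step m.+1 (martin_loop m.+1 f x) = None \/ size (martin_loop m.+1 f x) = size x + f).
Proof.
elim: f x => [|f IH] x hx /=; first by split => //; right; rewrite addn0.
case E: (martin_step m.+1 x) => [y|]; last by split => //; left.
have [hy hs] : Inv m y /\ size y = (size x).+1.
  move: E; rewrite /martin_step.
  case: ifP => h0; first by case=> <-; split; [apply: Inv_step | rewrite size_rcons].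
  case: ifP => h1 // [<-]; split; last by rewrite size_rcons.
  by apply: Inv_step => //; rewrite h0.
have [? [?|hz]] := IH y hy; split => //; first by left.
by right; rewrite hz hs addSnnS.
Qed.

Definition mfinal m := martin_loop m.+1 (2 ^ m.+1).+1 (nseq m true).

Lemma final_props m : Inv m (mfinal m) /\ martin_step m.+1 (mfinal m) = None.
Proof.
have h0 : Inv m (nseq m true).
  split; rewrite ?size_nseq //.
  - by rewrite take_oversize ?size_nseq.
  - by rewrite substrings_small ?size_nseq.
  - by move=> k; lia.
have [hi [hn|hs]] := loop_inv ((2 ^ m.+1).+1) h0; first by [].
exfalso; case: hi => _ _ hu _.
have hsub : {subset substrings m.+1 (mfinal m) <= allw m.+1}.
  by move=> w hw; rewrite allw_mem (subs_size hw).
have := uniq_leq_size hu hsub.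
rewrite size_allw /substrings size_mkseq -/(mfinal m) hs size_nseq; lia.
Qed.


Section Count.
Variable m : nat.

Lemma W_mkseq x : substrings m.+1 x = mkseq (fun i => substr x i m.+1) (size x - m).
Proof. rewrite /substrings; set k := size x; congr mkseq; lia. Qed.

Lemma count_out x v : count (fun w => take m w == v) (substrings m.+1 x) =
  count (fun j => substr x j m == v) (iota 0 (size x - m)).
Proof.
rewrite W_mkseq /mkseq count_map; apply: eq_count => j /=.
by rewrite /substr take_takel.
Qed.

Lemma count_in x v : count (fun w => drop 1 w == v) (substrings m.+1 x) =
  count (fun j => substr x j m == v) (iota 1 (size x - m)).
Proof.
rewrite W_mkseq /mkseq count_map (iotaDl 1 0) count_map; apply: eq_count => j /=.
rewrite /substr -drop_drop; case: (drop j x) => [|a s] /=.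
  by [].
by rewrite !drop0.
Qed.

Lemma occ_split x v :
  count (fun j => substr x j m == v) (iota 0 (size x - m).+1) =
  count (fun j => substr x j m == v) (iota 0 (size x - m)) + (substr x (size x - m) m == v) /\
  count (fun j => substr x j m == v) (iota 0 (size x - m).+1) =
  (substr x 0 m == v) + count (fun j => substr x j m == v) (iota 1 (size x - m)).
Proof.
split; last by [].
by rewrite -addn1 iotaD count_cat /= add0n addn0.
Qed.

Lemma count2_le (W : seq (seq bool)) (p : pred (seq bool)) a1 a2 : uniq W ->
  (forall w, w \in W -> p w -> w = a1 \/ w = a2) -> count p W <= 2.
Proof.
move=> hu h; rewrite -size_filter.
have := uniq_leq_size (filter_uniq p hu) (s2 := [:: a1; a2]); apply => w.
rewrite mem_filter => /andP[pw wW]; rewrite !inE; case: (h w wW pw) => ->; rewrite eqxx ?orbT //.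
Qed.

Lemma count2_ge (W : seq (seq bool)) (p : pred (seq bool)) a1 a2 : a1 != a2 ->
  a1 \in W -> a2 \in W -> p a1 -> p a2 -> 2 <= count p W.
Proof.
move=> hne h1 h2 p1 p2; rewrite -size_filter.
have := uniq_leq_size (s1 := [:: a1; a2]) (s2 := filter p W); apply.
  by rewrite /= inE hne.
by move=> w; rewrite !inE mem_filter => /orP[] /eqP ->; apply/andP.
Qed.

Lemma count2_mem (W : seq (seq bool)) (p : pred (seq bool)) a1 a2 : uniq W ->
  (forall w, w \in W -> p w -> w = a1 \/ w = a2) -> 2 <= count p W -> a1 \in W.
Proof.
move=> hu h; apply: contraTT => ha; rewrite -ltnNge ltnS -size_filter.
have := uniq_leq_size (filter_uniq p hu) (s2 := [:: a2]); apply => w.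
rewrite mem_filter => /andP[pw wW]; rewrite !inE; case: (h w wW pw) => hw.
  by move: wW; rewrite hw (negbTE ha).
by rewrite hw.
Qed.

Lemma stuck_mem x : Inv m x -> martin_step m.+1 x = None ->
  rcons (drop (size x - m) x) false \in substrings m.+1 x /\
  rcons (drop (size x - m) x) true \in substrings m.+1 x.
Proof.
case=> h1 _ hu _; rewrite /martin_step.
case: ifP => // h0; case: ifP => // h2 _.
move: h0 h2; rewrite !substrings_rcons // !rcons_uniq hu !andbT.
by move=> /negbFE -> /negbFE ->.
Qed.

Lemma greedy x v : Inv m x -> size v = m -> rcons v true \in substrings m.+1 x ->
  rcons v false \in substrings m.+1 x.
Proof.
case=> h1 h2 hu h4 hv hin; move: (hin); rewrite {1}W_mkseq => /mapP[j]; rewrite mem_iota add0n => hj hx.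
have hk : m <= j + m < size x by move: hj; set k := size x; lia.
have := h4 _ hk.
have -> : j + m - m = j by lia.
have -> : substr x j m = v.
  rewrite /substr -(take_takel _ (leqnSn m)) -/(substr x j m.+1) -hx -cats1 takel_cat ?hv // take_oversize ?hv //.
apply.
have := congr1 (fun s => nth false s m) hx => /=.
rewrite nth_rcons hv ltnn eqxx /substr nth_take // nth_drop addnC => <-.
by [].
Qed.
End Count.


Lemma nseqSr (k : nat) (b : bool) : nseq k.+1 b = rcons (nseq k b) b.
Proof. by elim: k => //= k ->. Qed.

Section Main.
Variable m : nat.
Let y := mfinal m.
Let W := substrings m.+1 y.

Lemma Wsize w : w \in W -> size w = m.+1.
Proof. exact: subs_size. Qed.

Lemma in_le v : count (fun w => drop 1 w == v) W <= 2.
Proof.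
have [_ _ hu _] := (final_props m).1.
apply: (count2_le (a1 := false :: v) (a2 := true :: v)) => // w hw /eqP.
move: (Wsize hw); case: w hw => [|c w] //= _ _; rewrite drop0 => ->; case: c; auto.
Qed.

Lemma take_rcons_m (v : seq bool) b : size v = m -> take m (rcons v b) = v.
Proof. by move=> hv; rewrite -cats1 takel_cat ?hv // take_oversize ?hv. Qed.

Lemma out_le v : count (fun w => take m w == v) W <= 2.
Proof.
have [_ _ hu _] := (final_props m).1.
apply: (count2_le (a1 := rcons v false) (a2 := rcons v true)) => // w hw /eqP.
move: (Wsize hw); case/lastP: w hw => [|w c] //= _; rewrite size_rcons => [[hs]].
rewrite take_rcons_m // => ->; case: c; auto.
Qed.

Lemma out_ge v : size v = m -> rcons v false \in W -> rcons v true \in W ->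
  2 <= count (fun w => take m w == v) W.
Proof.
move=> hv h1 h2; apply: (count2_ge (a1 := rcons v false) (a2 := rcons v true)) => //=;
  by rewrite ?eqseq_rcons ?andbF ?take_rcons_m.
Qed.

Let K := size y - m.

Lemma substr_last : substr y K m = drop (size y - m) y.
Proof.
have [[h1 _ _ _] _] := final_props m.
by rewrite /substr take_oversize // size_drop -/y; move: h1; set k := size y; lia.
Qed.

Lemma substr_first : substr y 0 m = nseq m true.
Proof. by have [[_ h2 _ _] _] := final_props m; rewrite /substr drop0. Qed.

Lemma u_ones : drop (size y - m) y = nseq m true.
Proof.
have [hi hn] := final_props m.
have [hf ht] := stuck_mem hi hn.
have hsz : size (drop (size y - m) y) = m.
  by case: hi => h1 _ _ _; rewrite size_drop -/y; move: h1; set k := size y; lia.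
have [e1 e2] := occ_split m y (drop (size y - m) y).
have := out_ge hsz hf ht; rewrite /W count_out => ho.
have := in_le (drop (size y - m) y); rewrite /W count_in => hin.
move: e1 e2; rewrite -/K substr_last eqxx substr_first => -> e2.
rewrite /K in e2 *.
have : nseq m true == drop (size y - m) y.
  by move: e2; case: eqP => // _; lia.
by move/eqP.
Qed.

Lemma in2 v : size v = m -> rcons v false \in W -> rcons v true \in W ->
  (false :: v) \in W /\ (true :: v) \in W.
Proof.
move=> hv h1 h2.
have [[_ _ hu _] _] := final_props m.
have [e1 e2] := occ_split m y v.
have := out_ge hv h1 h2; rewrite /W count_out => ho.
have hin : 2 <= count (fun w => drop 1 w == v) W.
  rewrite /W count_in; move: e1 e2; rewrite -/K substr_last u_ones substr_first => -> e2.
  rewrite /K in e2 *; case: eqP e2 => _ e2; lia.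
have hw : forall a1 a2 w, (a1 = false :: v /\ a2 = true :: v) \/ (a1 = true :: v /\ a2 = false :: v) ->
   w \in W -> drop 1 w == v -> w = a1 \/ w = a2.
  move=> a1 a2 w ha hw /eqP; move: (Wsize hw); case: w hw => [|c w] //= _ _; rewrite drop0 => ->.
  by case: ha => -[-> ->]; case: c; auto.
split.
  by apply: (count2_mem (p := fun w => drop 1 w == v) (a1 := false :: v) (a2 := true :: v) hu) => // w; apply: hw; left.
by apply: (count2_mem (p := fun w => drop 1 w == v) (a1 := true :: v) (a2 := false :: v) hu) => // w; apply: hw; right.
Qed.

Lemma allP_words j (z : seq bool) : j <= m -> size z = j ->
  rcons (z ++ nseq (m - j) true) false \in W /\ rcons (z ++ nseq (m - j) true) true \in W.
Proof.
have [hi hn] := final_props m.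
elim: j z => [|j IH] z hj hz.
  case: z hz => // _; rewrite subn0 /= -u_ones; exact: stuck_mem.
case: z hz => [|c z0] // [hz0].
have [h1 h2] := IH z0 (ltnW hj) hz0.
have e : m - j = (m - j.+1).+1 by lia.
rewrite e nseqSr -rcons_cat in h1 h2.
have hv : size (rcons (z0 ++ nseq (m - j.+1) true) true) = m.
  by rewrite size_rcons size_cat size_nseq; lia.
have [hf ht] := in2 hv h1 h2.
have hc : rcons (c :: z0 ++ nseq (m - j.+1) true) true \in W.
  by rewrite rcons_cons; case: c; rewrite ?hf ?ht.
split => //; apply: greedy hi _ hc.
by rewrite /= size_cat size_nseq; lia.
Qed.

Lemma all_in w : size w = m.+1 -> w \in W.
Proof.
case/lastP: w => [|v b] //; rewrite size_rcons => -[hv].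
have [h1 h2] := allP_words (leqnn m) hv.
by rewrite subnn cats0 in h1 h2; case: b.
Qed.

Lemma W_size : size W = 2 ^ m.+1.
Proof.
have [[_ _ hu _] _] := final_props m.
apply/eqP; rewrite eqn_leq; apply/andP; split.
  rewrite -(size_allw m.+1); apply: uniq_leq_size hu _ => w hw.
  by rewrite allw_mem (Wsize hw).
rewrite -(size_allw m.+1); apply: uniq_leq_size (allw_uniq _) _ => w.
by rewrite allw_mem => /eqP; apply: all_in.
Qed.
End Main.


Lemma size_flat (T : Type) (ss : seq (seq T)) L :
  all (fun s => size s == L) ss -> size (flatten ss) = L * size ss.
Proof.
elim: ss => [|s ss IH] /=; first by rewrite muln0.
by case/andP => /eqP hs /IH; rewrite size_cat hs => ->; rewrite mulnS.
Qed.

Lemma nth_flat (T : Type) (x0 : T) (ss : seq (seq T)) L q :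
  all (fun s => size s == L) ss -> q < L * size ss ->
  nth x0 (flatten ss) q = nth x0 (nth [::] ss (q %/ L)) (q %% L).
Proof.
elim: ss q => [|s ss IH] q /=; first by rewrite muln0.
case/andP => /eqP hs hall hq; rewrite nth_cat hs.
case: ltnP => hqL.
  by rewrite divn_small // modn_small.
have hL : 0 < L by case: (posnP L) hq => // ->; rewrite mul0n.
have e : q = 1 * L + (q - L) by lia.
rewrite IH //; last by move: hq; rewrite mulnS; lia.
by rewrite [in RHS]e divnMDl // modnMDl add1n.
Qed.

Section DB.
Variable m : nat.
Let n := m.+1.
Let N := 2 ^ n.
Let y := mfinal m.
Let d := db n.

Lemma N_gt : m < N.
Proof. by apply: ltn_trans (ltn_expl _ (isT : 1 < 2)). Qed.

Lemma size_y : size y = m + N.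
Proof.
have := W_size m; rewrite W_mkseq size_mkseq -/y -/N.
have [[h1 _ _ _] _] := final_props m; move: h1; rewrite -/y; set k := size y; lia.
Qed.

Lemma d_def : d = drop m y.
Proof. by []. Qed.

Lemma size_d : size d = N.
Proof. by rewrite d_def size_drop size_y; lia. Qed.

Definition fb p := nth false d (p %% N).

Lemma y_nth p : p < m + N -> nth false y p = fb (p + N - m).
Proof.
move=> hp; have hNm := N_gt.
have [[_ h2 _ _] _] := final_props m.
rewrite /fb; case: (ltnP p m) => hpm.
  have -> : nth false y p = true.
    by rewrite -(nth_take _ hpm) -/y h2 nth_nseq hpm.
  rewrite modn_small; last by lia.
  rewrite d_def nth_drop.
  have := congr1 (fun s => nth false s p) (u_ones m).
  rewrite -/y size_y nth_drop nth_nseq hpm.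
  by have -> : m + (p + N - m) = m + N - m + p by lia.
have -> : p + N - m = (p - m) + N by lia.
rewrite modnDr modn_small; last by lia.
by rewrite d_def nth_drop; congr nth; lia.
Qed.

Definition gw p := mkseq (fun r => fb (p + r)) n.

Lemma gw_mod p : gw p = gw (p %% N).
Proof.
apply: eq_mkseq => r; rewrite /fb; congr nth.
by rewrite modnDml.
Qed.

Lemma word_g w : size w = n -> exists p, w = gw p.
Proof.
move=> hw; have := all_in hw; rewrite W_mkseq -/y size_y => /mapP[j].
rewrite mem_iota add0n => hj ->; exists (j + N - m).
have hNm := N_gt.
apply: (@eq_from_nth _ false).
  by rewrite size_mkseq /substr size_take size_drop size_y; case: ifP => //; lia.
rewrite /substr size_take size_drop size_y => r hr.
have hr' : r < m.+1.
  move: hr; set k := m + N - j; have : k <= m + N by rewrite /k leq_subr.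
  by case: ifP => // /negbT; rewrite -leqNgt => h1 _ h2; apply: leq_trans h2 h1.
rewrite (nth_take _ hr') nth_drop (nth_mkseq _ _ hr') y_nth; last by lia.
congr fb; lia.
Qed.
End DB.


Opaque db martin_loop.
Section SS.
Variable m : nat.
Let n := m.+1.
Let N := 2 ^ n.
Let d := db n.
Let s := s_of n.
Let t := t_of n.
Let M := 2 ^ (n - s).
Let L := t * N.

Lemma t_mul : t * 2 ^ s = n.
Proof. by rewrite /t /t_of divnK // pfactor_dvdnn. Qed.

Lemma t_odd : odd t.
Proof.
apply/negP => /negP; rewrite -dvdn2 => h2.
have : 2 ^ s.+1 %| n by rewrite -t_mul expnS; apply: dvdn_mul.
by rewrite pfactor_dvdn // /s /s_of ltnn.
Qed.

Lemma s_le : s <= n.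
Proof.
have h1 : 2 ^ s <= n by apply: dvdn_leq => //; apply: pfactor_dvdnn.
have h2 : n < 2 ^ n by apply: ltn_expl.
have : 2 ^ s < 2 ^ n := leq_ltn_trans h1 h2.
by rewrite ltn_exp2l // => /ltnW.
Qed.

Lemma N_split : N = 2 ^ s * M.
Proof. by rewrite /N /M -expnD subnKC // s_le. Qed.

Lemma L_eq : L = n * M.
Proof. by rewrite /L N_split mulnA t_mul. Qed.

Lemma M_gt0 : 0 < M. Proof. by rewrite expn_gt0. Qed.
Lemma N_gt0 : 0 < N. Proof. by rewrite expn_gt0. Qed.
Lemma s_gt0 : 0 < 2 ^ s. Proof. by rewrite expn_gt0. Qed.

Lemma rot_nth i r : i <= N -> r < N -> nth false (rot i d) r = fb m (r + i).
Proof.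
move=> hi hr; have hd : size d = N := size_d m.
have -> : fb m (r + i) = nth false d ((r + i) %% N) by [].
rewrite /rot nth_cat size_drop hd.
case: ltnP => h.
  by rewrite nth_drop modn_small ?[r + i]addnC //; lia.
rewrite nth_take; last by lia.
have -> : r + i = (r - (N - i)) + N by lia.
by rewrite modnDr modn_small //; lia.
Qed.

Lemma size_B i : size (B n i) = L.
Proof.
rewrite /B (@size_flat _ _ N) ?size_nseq 1?mulnC //.
by rewrite all_nseq /= size_rot (size_d m) eqxx orbT.
Qed.

Lemma B_nth i r : i <= N -> r < L -> nth false (B n i) r = fb m (r + i).
Proof.
move=> hi hr; rewrite /B (@nth_flat _ _ _ N); first last.
- by rewrite size_nseq mulnC.
- by rewrite all_nseq /= size_rot (size_d m) eqxx orbT.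
rewrite nth_nseq -/t ifT; last by rewrite ltn_divLR ?N_gt0.
rewrite rot_nth // ?ltn_pmod ?N_gt0 //.
by rewrite /fb modnDml.
Qed.

Lemma size_S : size (S n) = 2 ^ s * L.
Proof.
rewrite /S (@size_flat _ _ L) ?size_map ?size_iota 1?mulnC //.
by apply/allP => x /mapP[i _ ->]; rewrite size_B.
Qed.

Lemma S_nth q : q < 2 ^ s * L -> nth false (S n) q = fb m (q %% L + q %/ L).
Proof.
move=> hq; have hL : 0 < L by rewrite L_eq muln_gt0 M_gt0.
have hqL : q %/ L < 2 ^ s by rewrite ltn_divLR // mulnC.
rewrite /S (@nth_flat _ _ _ L); first last.
- by rewrite size_map size_iota mulnC.
- by apply/allP => x /mapP[i _ ->]; rewrite size_B.
rewrite (nth_map 0) ?size_iota // nth_iota // add0n -/s.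
rewrite B_nth ?ltn_pmod //.
apply: ltnW; apply: leq_trans hqL _; rewrite N_split leq_pmulr //; exact: M_gt0.
Qed.

Lemma block k : k < N -> substr (S n) (k * n) n = gw m (k %/ M + (k %% M) * n).
Proof.
move=> hk.
have hM := M_gt0; have hL : L = n * M := L_eq.
set a := k %/ M; set b := k %% M.
have hb : b < M by rewrite /b ltn_pmod.
have hkab : k = a * M + b by rewrite /a /b -divn_eq.
have ha : a < 2 ^ s by rewrite /a ltn_divLR // -N_split.
have hSz : size (S n) = n * N by rewrite size_S hL N_split; lia.
apply: (@eq_from_nth _ false).
  rewrite size_mkseq /substr size_take size_drop hSz.
  have : k * n + n <= n * N by rewrite mulnC -mulnSr leq_mul2l hk orbT.
  by case: ifP => //; lia.
move=> r; rewrite /substr size_take size_drop hSz => hr.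
have hrn : r < n.
  by move: hr; case: ifP => // /negbT; rewrite -leqNgt => h1 h2; apply: leq_trans h2 h1.
rewrite nth_take // nth_drop (nth_mkseq _ _ hrn).
have hq : k * n + r = a * L + (b * n + r) by rewrite hkab hL; lia.
have hbr : b * n + r < L.
  rewrite hL; apply: (@leq_trans (b.+1 * n)); first by rewrite mulSn; lia.
  by rewrite mulnC leq_mul2l hb orbT.
rewrite S_nth; last first.
  rewrite hq; apply: (@leq_trans (a.+1 * L)); first by rewrite mulSn; lia.
  by rewrite leq_mul2r ha orbT.
rewrite hq divnMDl; last by lia.
rewrite divn_small // addn0 modnMDl modn_small //.
congr fb; lia.
Qed.

Lemma surj p : exists2 k, k < N & (k %/ M + (k %% M) * n) %% N = p %% N.
Proof.
have hM := M_gt0; have hs := s_gt0.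
set p0 := p %% N.
have hp0 : p0 < N by rewrite ltn_pmod // N_gt0.
set a := p0 %% 2 ^ s; set c := p0 %/ 2 ^ s.
have ha : a < 2 ^ s by rewrite ltn_pmod.
have hc : c < M by rewrite ltn_divLR // mulnC -N_split.
have hp0e : p0 = c * 2 ^ s + a by rewrite /c /a -divn_eq.
have hcop : coprime t M.
  by rewrite /M; apply: coprimeXr; rewrite coprime_sym coprime2n t_odd.
have ht : 0 < t by case: (posnP t) t_odd => // ->.
case: (egcdnP M ht) => km kn e _.
rewrite (eqP hcop) in e.
set b := (c * km) %% M.
have hb : b < M by rewrite /b ltn_pmod.
have hbt : b * t %% M = c.
  rewrite /b modnMml -mulnA e mulnDr mulnA modnMDl muln1 modn_small //.
set z := b * t %/ M.
have hbt2 : b * t = z * M + c by rewrite {1}(divn_eq (b * t) M) hbt.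
exists (a * M + b).
  apply: (@leq_trans (a.+1 * M)); first by rewrite mulSn; lia.
  by rewrite N_split leq_mul2r ha orbT.
rewrite divnMDl // divn_small // addn0 modnMDl (modn_small hb).
have -> : a + b * n = z * N + p0.
  rewrite -t_mul hp0e N_split mulnA hbt2; nia.
by rewrite modnMDl modn_small.
Qed.
End SS.

Opaque db martin_loop.

Lemma count_mod n (P : pred nat) K : 0 < n ->
  count (fun i => (i %% n == 0) && P i) (iota 0 (K * n)) = count (fun k => P (k * n)) (iota 0 K).
Proof.
case: n => // n _; elim: K => [|K IH] //.
rewrite mulSnr iotaD count_cat IH -[K.+1]addn1 iotaD count_cat /= add0n.
congr addn.
rewrite add0n addn0 -[RHS]addn0; congr addn.
  by rewrite modnMl.
rewrite (eq_in_count (a2 := pred0)) ?count_pred0 // => i; rewrite mem_iota => /andP[h1 h2] /=.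
have -> : i = K * n.+1 + (i - K * n.+1) by lia.
rewrite modnMDl modn_small; last by lia.
by have -> : i - K * n.+1 == 0 = false by apply/negbTE; lia.
Qed.

Theorem lemma1 (n : nat) (w : seq bool) :
  0 < n -> size w = n -> occ_b w (S n) = 1.
Proof.
case: n => // m _ hw.
set n := m.+1.
set N := 2 ^ n.
have hsz : size (S n) = N * n.
  rewrite size_S L_eq /N (N_split m); lia.
rewrite /occ_b hw hsz count_mod //.
set blk := fun k => substr (S n) (k * n) n.
have -> : count (fun k => substr (S n) (k * n) n == w) (iota 0 N) = count (pred1 w) (map blk (iota 0 N)).
  by rewrite count_map.
have hsub : {subset allw n <= map blk (iota 0 N)}.
  move=> u; rewrite allw_mem => /eqP hu.
  have [p ->] := word_g hu.
  have [k hk hkp] := surj m p.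
  rewrite gw_mod -hkp -gw_mod; apply/mapP; exists k; first by rewrite mem_iota.
  by rewrite /blk block.
have hu : uniq (map blk (iota 0 N)).
  apply: (leq_size_uniq (allw_uniq n) hsub).
  by rewrite size_map size_iota size_allw.
by rewrite count_uniq_mem // hsub // allw_mem hw.
Qed.
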